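(* Let $G \ge 2$ and $p_t \in (0,1)$. Let $r_{t,1},\dots,r_{t,G}$ be i.i.d. $\mathrm{Bernoulli}(p_t)$, $R=\sum_{j} r_{t,j}$, $\hat p_t=R/G$, $\hat A_{t,i}=r_{t,i}-\hat p_t$, $A_{t,i}=r_{t,i}-p_t$, and $\mathcal S=\{1\le R\le G-1\}$. Then for every $i\in[G]$, \[ \mathbb E\!\left[A_{t,i}-\hat A_{t,i}\mid \mathcal S\right]=\frac{p_t(1-p_t)^G+p_t^{G+1}-p_t^G}{1-(1-p_t)^G-p_t^G}. \]
   Context: $\hat A_{t,i}$ is the group-relative advantage with group baseline $\hat p_t$; $A_{t,i}$ is the expected advantage; $\mathcal S$ is the event that not all rewards in the group are equal. *)

(* Defs.v *)
From HB Require Import structures.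
From mathcomp Require Import all_boot all_order all_algebra.
Set Implicit Arguments. Unset Strict Implicit. Unset Printing Implicit Defensive.
Import Order.TTheory GRing.Theory Num.Theory.
Local Open Scope ring_scope.

Section Defs.
Variables (R : realFieldType) (G : nat).

Definition outcome := {ffun 'I_G -> bool}.

Definition iid_bernoulli (p : R) (w : outcome) : R :=
  \prod_(j < G) (if w j then p else 1 - p).

Definition reward (i : 'I_G) (w : outcome) : R := (w i)%:R.

Definition nsucc (w : outcome) : nat := \sum_(j < G) (w j : nat).

Definition phat (w : outcome) : R := (nsucc w)%:R / G%:R.

Definition Ahat (i : 'I_G) (w : outcome) : R := reward i w - phat w.

Definition Aexp (p : R) (i : 'I_G) (w : outcome) : R := reward i w - p.

Definition eventS (w : outcome) : bool := (1 <= nsucc w <= G - 1)%N.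

Definition cond_expect (P : outcome -> R) (S : pred outcome) (X : outcome -> R) : R :=
  (\sum_(w | S w) P w * X w) / (\sum_(w | S w) P w).

End Defs.

(* Main.v *)
Require Import Defs.
From HB Require Import structures.
From mathcomp Require Import all_boot all_order all_algebra.
From mathcomp Require Import ring lra zify.
Import Order.TTheory GRing.Theory Num.Theory.
Local Open Scope ring_scope.

Section Aux.
Variables (R : realFieldType) (G : nat).

Lemma sum_prod (F : 'I_G -> bool -> R) :
  \sum_(w : outcome G) \prod_(j < G) F j (w j) = \prod_(j < G) (F j true + F j false).
Proof.
rewrite -(bigA_distr_bigA F); apply: eq_bigr => j _; by rewrite big_bool.
Qed.

Lemma sumP (p : R) : \sum_(w : outcome G) iid_bernoulli p w = 1.
Proof.
rewrite /iid_bernoulli (sum_prod (fun _ b => if b then p else 1 - p)).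
by rewrite big1 // => j _; rewrite addrC subrK.
Qed.

Lemma sumPj (p : R) (j : 'I_G) :
  \sum_(w : outcome G) iid_bernoulli p w * (w j)%:R = p.
Proof.
transitivity (\sum_(w : outcome G) \prod_(k < G)
  ((if w k then p else 1 - p) * (if k == j then (w k)%:R else 1))).
  apply: eq_bigr => w _; rewrite /iid_bernoulli big_split /=; congr (_ * _).
  by rewrite (bigD1 j) //= eqxx big1 ?mulr1 // => k /negbTE ->.
rewrite (sum_prod (fun k b => (if b then p else 1 - p) * (if k == j then b%:R else 1))).
rewrite (bigD1 j) //= eqxx big1 ?mulr1 ?mulr0 ?addr0 // => k /negbTE -> /=.
by rewrite !mulr1 addrC subrK.
Qed.

Lemma sumPn (p : R) :
  \sum_(w : outcome G) iid_bernoulli p w * (nsucc w)%:R = G%:R * p.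
Proof.
transitivity (\sum_(j < G) \sum_(w : outcome G) iid_bernoulli p w * (w j)%:R).
  rewrite exchange_big /=; apply: eq_bigr => w _.
  by rewrite /nsucc natr_sum mulr_sumr.
by under eq_bigr do rewrite sumPj; rewrite sumr_const card_ord mulr_natl.
Qed.

Definition f0 : outcome G := [ffun _ => false].
Definition f1 : outcome G := [ffun _ => true].

Lemma nsucc_compl (w : outcome G) :
  (nsucc w + \sum_(j < G) (~~ w j : nat))%N = G.
Proof.
rewrite /nsucc -big_split /=.
rewrite (eq_bigr (fun _ => 1%N)); last by move=> j _; case: (w j).
by rewrite sum_nat_const card_ord muln1.
Qed.

Lemma notS (w : outcome G) : (2 <= G)%N ->
  ~~ eventS w = (w == f0) || (w == f1).
Proof.
move=> HG.
have H := nsucc_compl w.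
have E0 : (nsucc w == 0%N) = (w == f0).
  rewrite /nsucc sum_nat_eq0; apply/forallP/eqP.
    move=> h; apply/ffunP => j; rewrite ffunE; move: (h j) => /=.
    by case: (w j).
  by move=> -> j; rewrite ffunE.
have E1 : (nsucc w == G) = (w == f1).
  have -> : (nsucc w == G) = (\sum_(j < G) (~~ w j : nat) == 0%N).
    move: H; set a := nsucc w; set b := \sum_(j < G) _; move=> H; apply/eqP/eqP; lia.
  rewrite sum_nat_eq0; apply/forallP/eqP.
    move=> h; apply/ffunP => j; rewrite ffunE; move: (h j) => /=.
    by case: (w j).
  by move=> -> j; rewrite ffunE.
rewrite /eventS -E0 -E1.
apply/idP/idP.
  move=> h; apply/orP; move: h; rewrite negb_and -!ltnNge.
  case/orP => h; [left | right]; apply/eqP; lia.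
case/orP => /eqP h; rewrite h; lia.
Qed.

End Aux.

Theorem lemma2 (R : realFieldType) (G : nat) (p : R) (i : 'I_G) :
  (2 <= G)%N -> 0 < p -> p < 1 ->
  cond_expect (iid_bernoulli p) (@eventS G)
    (fun w => Aexp p i w - @Ahat R G i w)
  = (p * (1 - p) ^+ G + p ^+ G.+1 - p ^+ G) / (1 - (1 - p) ^+ G - p ^+ G).
Proof.
move=> HG p0 p1.
have f01 : f0 G != f1 G.
  apply/eqP => /ffunP /(_ (Ordinal (leq_trans (isT : 0 < 2)%N HG))).
  by rewrite !ffunE.
have split_sum : forall F : outcome G -> R,
  \sum_(w | eventS w) F w = \sum_w F w - F (f0 G) - F (f1 G).
  move=> F.
  have E : \sum_(w | ~~ eventS w) F w = F (f0 G) + F (f1 G).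
    rewrite (eq_bigl (fun w => (w == f0 G) || (w == f1 G))); last by move=> w; rewrite notS.
    rewrite (bigD1 (f0 G)) ?eqxx //= (bigD1 (f1 G)) ?eqxx ?orbT //=.
    rewrite big_pred0; last first.
      by move=> w; case: (w =P f0 G); case: (w =P f1 G) => // -> ->.
    by rewrite addr0. by rewrite eq_sym.
  rewrite (bigID (fun w => eventS w) predT) /= E; ring.
have P0 : iid_bernoulli p (f0 G) = (1 - p) ^+ G.
  by rewrite /iid_bernoulli (eq_bigr (fun _ => 1 - p)) ?prodr_const ?card_ord // => j _; rewrite ffunE.
have P1 : iid_bernoulli p (f1 G) = p ^+ G.
  by rewrite /iid_bernoulli (eq_bigr (fun _ => p)) ?prodr_const ?card_ord // => j _; rewrite ffunE.
have G0 : G%:R != 0 :> R by rewrite pnatr_eq0 -lt0n (leq_trans _ HG).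
have N0 : nsucc (f0 G) = 0%N.
  by rewrite /nsucc big1 // => j _; rewrite ffunE.
have N1 : nsucc (f1 G) = G.
  by rewrite /nsucc (eq_bigr (fun _ => 1%N)) ?sum_nat_const ?card_ord ?muln1 // => j _; rewrite ffunE.
have X : forall w, Aexp p i w - @Ahat R G i w = (nsucc w)%:R / G%:R - p.
  by move=> w; rewrite /Aexp /Ahat /phat; ring.
rewrite /cond_expect.
under eq_bigr do rewrite X.
rewrite !split_sum sumP /= P0 P1 N0 N1.
have -> : \sum_(w : outcome G) iid_bernoulli p w * ((nsucc w)%:R / G%:R - p) = 0.
  transitivity ((\sum_(w : outcome G) iid_bernoulli p w * (nsucc w)%:R) / G%:R - p * \sum_(w : outcome G) iid_bernoulli p w).
    rewrite mulr_suml mulr_sumr -sumrB; apply: eq_bigr => w _; ring.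
  rewrite sumPn sumP; field.
  by [].
congr (_ / _); rewrite exprS mul0r; field.
by [].
Qed.
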